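(* Let $n\ge 2$ and let $k_1,\dots,k_n$, $a_1,\dots,a_{n-1}$, $b_1,\dots,b_n$ be real or complex numbers. Let $A_2$ be the $n\times n$ matrix with entries $$(A_2)_{ij}=\begin{cases} k_j b_j, & i\le j,\\ k_i a_j, & i>j.\end{cases}$$ Then $$\det(A_2)=k_nb_n\,(k_1b_1-k_2a_1)(k_2b_2-k_3a_2)\cdots(k_{n-1}b_{n-1}-k_na_{n-1}).$$ In particular, $A_2$ is singular if $k_n=0$, or $b_n=0$, or $k_ib_i-k_{i+1}a_i=0$ for some $i\in\{1,\dots,n-1\}$. *)

(* Defs.v *)
From mathcomp Require Import all_boot all_order all_algebra.
Set Implicit Arguments. Unset Strict Implicit. Unset Printing Implicit Defensive.
Import GRing.Theory.
Local Open Scope ring_scope.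

(* Rows/columns of 'M_n are 0-based, so index i : 'I_n stands for i+1. *)
Definition A2 (R : ringType) (n : nat) (k a b : nat -> R) : 'M[R]_n :=
  \matrix_(i < n, j < n)
    if (i <= j)%N then k j.+1 * b j.+1 else k i.+1 * a j.+1.

(* Main.v *)
Require Import Defs.
From mathcomp Require Import all_boot all_order all_algebra.
Import GRing.Theory.
Local Open Scope ring_scope.

Theorem mainTheorem4 (R : comRingType) (n : nat) (k a b : nat -> R) :
  (2 <= n)%N ->
  \det (A2 n k a b) =
    k n * b n * \prod_(1 <= i < n) (k i * b i - k i.+1 * a i).
Proof.
case: n k a b => [|m] // k a b hn.
set A := A2 m.+1 k a b.
pose S : 'M[R]_m.+1 := \matrix_(i, j) ((j : nat) == i.+1)%:R.
pose M : 'M[R]_m.+1 := 1%:M - S.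
have detM : \det M = 1.
  rewrite -det_tr det_trig; last first.
    apply/forallP => i; apply/forallP => j; apply/implyP => lij.
    rewrite !mxE.
    have -> : (j == i) = false by apply/negbTE; rewrite neq_ltn lij orbT.
    have -> : ((i : nat) == j.+1) = false.
      by apply/negbTE; rewrite neq_ltn (ltn_trans lij) ?orbT.
    by rewrite /= subrr.
  apply: big1 => i _; rewrite !mxE eqxx /=.
  have -> : ((i : nat) == i.+1) = false by rewrite eqn_leq ltnn andbF.
  by rewrite subr0.
have SA : forall (i j : 'I_m.+1), (S *m A) i j =
    if (i.+1 < m.+1)%N then (if (i < j)%N then k j.+1 * b j.+1 else k i.+2 * a j.+1) else 0.
  move=> i j; rewrite !mxE.
  case: ifP => hi.
    rewrite (bigD1 (Ordinal hi)) //= big1 ?addr0.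
      by rewrite !mxE eqxx mul1r /=.
    move=> l hl; rewrite !mxE.
    have -> : ((l : nat) == i.+1) = false.
      apply/negbTE; apply: contra hl => /eqP e; apply/eqP; exact: val_inj.
    by rewrite mul0r.
  apply: big1 => l _; rewrite !mxE.
  have -> : ((l : nat) == i.+1) = false.
    apply/negbTE/eqP => e; move: (ltn_ord l); rewrite e hi.
    by [].
  by rewrite mul0r.
have MA : forall i j, (M *m A) i j = A i j - (S *m A) i j.
  by move=> i j; rewrite /M mulmxBl mul1mx !mxE.
have key : \det (M *m A) = \det A by rewrite det_mulmx detM mul1r.
rewrite -key det_trig; last first.
  apply/forallP => i; apply/forallP => j; apply/implyP => lij.
  rewrite MA SA /A /A2 !mxE (ltnW lij) lij.
  case: ifP => h; first by rewrite subrr.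
  by move: h; rewrite (leq_ltn_trans lij (ltn_ord j)).
rewrite big_ord_recr /= big_add1 /= big_mkord mulrC; congr (_ * _); last first.
  apply: eq_bigr => i _.
  by rewrite MA SA /A /A2 !mxE /= ltnS ltn_ord leqnn ltnn.
by rewrite MA SA /A /A2 !mxE /= ltnn leqnn subr0.
Qed.
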